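(* Let $\Gamma$ be the semigroup associated to an irreducible plane curve singularity, minimally generated by $r_0<\cdots<r_h$, with $h\ge 2$. Then $r_h\ge \frac13\left(5\cdot 2^{2h-1}-1\right)$.
   Context: A numerical semigroup is a submonoid of $(\mathbb N,+)$ with finite complement in $\mathbb N$; it has a unique minimal generating system. $\langle X\rangle$ is the submonoid generated by $X$. For an arrangement $(r_0,\ldots,r_h)$ of the minimal generators, set $d_k=\gcd(r_0,\ldots,r_{k-1})$ ($k=1,\ldots,h+1$) and $e_k=d_k/d_{k+1}$ ($k=1,\ldots,h$). A set $A$ of positive integers with nontrivial partition $A=A_1\cup A_2$ is the gluing of $A_1$ and $A_2$ if $\mathrm{lcm}(\gcd A_1,\gcd A_2)\in\langle A_1\rangle\cap\langle A_2\rangle$. $\Gamma$ is free for $(r_0,\ldots,r_h)$ if $h=0$, or $h\ge1$, $\{r_0,\ldots,r_h\}$ is the gluing of $\{r_0,\ldots,r_{h-1}\}$ and $\{r_h\}$, and $\langle r_0/d_h,\ldots,r_{h-1}/d_h\rangle$ is free for $(r_0/d_h,\ldots,r_{h-1}/d_h)$. $\Gamma$ is telescopic if it is free for the increasing arrangement $r_0<\cdots<r_h$. $\Gamma$ is the semigroup associated to an irreducible plane curve singularity if it is telescopic and $e_kr_k<r_{k+1}$ for all $k=1,\ldots,h-1$. *)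

(* Defs.v *)
From mathcomp Require Import all_boot.
Set Implicit Arguments. Unset Strict Implicit. Unset Printing Implicit Defensive.

Definition in_monoid (A : seq nat) (n : nat) : Prop :=
  exists c : nat -> nat, n = \sum_(i < size A) c i * nth 0 A i.

Definition gcd_seq (A : seq nat) : nat := foldr gcdn 0 A.

Definition numerical_semigroup (G : nat -> Prop) : Prop :=
  G 0 /\ (forall a b, G a -> G b -> G (a + b)) /\
  (exists N, forall n, N <= n -> G n).

Definition minimal_generating_system (G : nat -> Prop) (r : seq nat) : Prop :=
  uniq r /\ (forall n, G n <-> in_monoid r n) /\
  (forall i, i < size r ->
     0 < nth 0 r i /\ ~ in_monoid (rem (nth 0 r i) r) (nth 0 r i)).

Definition dk (r : seq nat) (k : nat) : nat := gcd_seq (take k r).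
Definition ek (r : seq nat) (k : nat) : nat := dk r k %/ dk r k.+1.

Definition gluing (A1 A2 : seq nat) : Prop :=
  A1 != [::] /\ A2 != [::] /\
  in_monoid A1 (lcmn (gcd_seq A1) (gcd_seq A2)) /\
  in_monoid A2 (lcmn (gcd_seq A1) (gcd_seq A2)).

Fixpoint free_rec (h : nat) (s : seq nat) : Prop :=
  match h with
  | 0 => True
  | h'.+1 =>
      gluing (take h s) [:: nth 0 s h] /\
      free_rec h' (map (fun x => x %/ dk s h) (take h s))
  end.

Definition free_for (r : seq nat) : Prop := free_rec (size r).-1 r.

Definition telescopic (r : seq nat) : Prop := sorted ltn r /\ free_for r.

Definition plane_curve_semigroup (r : seq nat) : Prop :=
  telescopic r /\
  (forall k, 1 <= k -> k <= (size r).-1 - 1 ->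
     ek r k * nth 0 r k < nth 0 r k.+1).

(* Main.v *)
Require Import Defs.
From mathcomp Require Import all_boot.
From mathcomp Require Import zify.

Lemma in_monoid_cat A B n : in_monoid A n -> in_monoid (A ++ B) n.
Proof.
case=> c ->; exists (fun i => if i < size A then c i else 0).
rewrite size_cat big_split_ord /=.
rewrite [X in _ = _ + X]big1 ?addn0; last first.
  by move=> i _; rewrite /= ltnNge leq_addr /= mul0n.
apply: eq_bigr => i _; rewrite /= ltn_ord nth_cat ltn_ord //.
Qed.

Lemma in_monoid_scale A n d : in_monoid A n -> in_monoid (map (muln^~ d) A) (n * d).
Proof.
case=> c ->; exists c; rewrite size_map big_distrl /=.
by apply: eq_bigr => i _; rewrite (nth_map 0) // mulnA.
Qed.

Lemma gcd_seq_dvd l x : x \in l -> gcd_seq l %| x.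
Proof.
elim: l => //= y l IH; rewrite inE => /orP [/eqP->|/IH H].
  exact: dvdn_gcdl.
exact: dvdn_trans (dvdn_gcdr _ _) H.
Qed.

Lemma gcd_seq_scale l d : all (fun x => d %| x) l ->
  gcd_seq (map (fun x => x %/ d) l) * d = gcd_seq l.
Proof.
elim: l => //= x l IH /andP [dx /IH H].
by rewrite muln_gcdl H divnK.
Qed.

Lemma gcd_seq_rcons l x : gcd_seq (rcons l x) = gcdn (gcd_seq l) x.
Proof.
rewrite /gcd_seq; elim: l => /= [|y l ->]; first by rewrite gcdn0 gcd0n.
by rewrite gcdnA.
Qed.

Lemma dkS r k : k < size r -> dk r k.+1 = gcdn (dk r k) (nth 0 r k).
Proof.
by move=> hk; rewrite /dk (take_nth 0 hk) gcd_seq_rcons.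
Qed.

Lemma free_glue h s : size s = h.+1 -> free_rec h s ->
  forall k, 0 < k <= h -> in_monoid (take k s) (lcmn (dk s k) (nth 0 s k)).
Proof.
elim: h s => [|h IH] s hs /=; first by move=> _ k; case: k.
case=> [[_ [_ [G _]]] Hf] k /andP [k0 kh].
rewrite /gcd_seq /= gcdn0 -/(gcd_seq _) in G.
case: (ltnP h k) => hk.
  have -> : k = h.+1 by apply/eqP; rewrite eqn_leq kh hk.
  exact: G.
set d := dk s h.+1.
set s' := map (fun x => x %/ d) (take h.+1 s).
have hs' : size s' = h.+1 by rewrite size_map size_take hs ltnSn.
have := IH s' hs' Hf k; rewrite k0 hk => /(_ erefl) M.
have dall : all (fun x => d %| x) (take h.+1 s).
  by apply/allP => x xin; exact: gcd_seq_dvd.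
have dallk : all (fun x => d %| x) (take k s).
  apply/allP => x xin; apply: (allP dall).
  by rewrite -[take k s](@take_takel _ k h.+1) ?(leqW hk) // in xin; exact: mem_take xin.
have tk : take k s' = map (fun x => x %/ d) (take k s).
  by rewrite /s' -map_take take_takel // leqW.
rewrite tk in M.
have := @in_monoid_scale _ _ d M.
have -> : map (muln^~ d) (map (fun x => x %/ d) (take k s)) = take k s.
  rewrite -map_comp -[RHS]map_id; apply/eq_in_map => x xin /=.
  by rewrite divnK //; exact: (allP dallk).
rewrite muln_lcml /dk tk gcd_seq_scale //.
have -> : nth 0 s' k * d = nth 0 s k.
  have kh1 : k < h.+1 by rewrite ltnS.
  rewrite /s' (nth_map 0); last by rewrite size_take hs ltnSn.
  rewrite nth_take // divnK //.
  by apply: (allP dall); rewrite -(nth_take 0 kh1); apply: mem_nth; rewrite size_take hs ltnSn.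
done.
Qed.

Lemma mult_gap a b d : a < b -> d %| a -> d %| b -> a + d <= b.
Proof.
move=> ab da db; have: d %| b - a by rewrite dvdn_sub.
move/dvdn_leq; rewrite subn_gt0 ab => /(_ erefl); lia.
Qed.

Theorem proposition5p1 (G : nat -> Prop) (r : seq nat) :
  numerical_semigroup G ->
  minimal_generating_system G r ->
  sorted ltn r ->
  plane_curve_semigroup r ->
  2 <= (size r).-1 ->
  5 * 2 ^ (2 * (size r).-1 - 1) - 1 <= 3 * nth 0 r (size r).-1.
Proof.
move=> _ [huniq [_ hmin]] hsort [[_ hfree] hpc] h2.
rewrite /free_for in hfree.
move: hpc h2 hfree; set h := (size r).-1 => hpc h2 hfree.
have hs : size r = h.+1 by move: h2; rewrite /h; case: (size r).
have r0pos : 0 < nth 0 r 0 by case: (hmin 0 _) => //; rewrite hs.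
have Dpos : forall k, 0 < k -> 0 < dk r k.
  move=> k k0; apply: (dvdn_gt0 r0pos); apply: gcd_seq_dvd.
  by rewrite -(nth_take 0 k0); apply: mem_nth; rewrite size_take hs; case: ifP; lia.
have DS : forall k, k <= h -> dk r k.+1 %| dk r k /\ dk r k.+1 %| nth 0 r k.
  by move=> k kh; rewrite dkS ?hs // dvdn_gcdl dvdn_gcdr.
have D1 : dk r 1 = nth 0 r 0 by rewrite dkS ?hs // /dk take0 gcd0n.
have He : forall k, 0 < k <= h -> dk r k = ek r k * dk r k.+1 /\ 2 <= ek r k.
  move=> k /andP [k0 kh]; have [d1 d2] := DS k kh.
  rewrite /ek divnK //; split => //.
  case E: (dk r k %/ dk r k.+1) => [|[|e]] //.
    by move: (Dpos k k0); rewrite -(divnK d1) E.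
  have Ek : dk r k.+1 = dk r k by rewrite -[RHS](divnK d1) E mul1n.
  have dk_r : dk r k %| nth 0 r k by rewrite -Ek.
  have := @free_glue h r hs hfree k; rewrite k0 kh => /(_ erefl).
  rewrite (lcmn_idPr dk_r) => M.
  have kr : k < size r by rewrite hs ltnS.
  case: (hmin k kr) => _ [].
  rewrite remE index_uniq //; exact: in_monoid_cat.
have r01 : nth 0 r 0 < nth 0 r 1.
  have : 1 < size r by rewrite hs ltnS (leq_trans _ h2).
  move: hsort; clear; case: r => [|a [|b s]] //= /andP [] //.
have base : nth 0 r 0 + dk r 2 <= nth 0 r 1.
  apply: mult_gap => //.
    by rewrite -D1; case: (DS 1 _); rewrite ?(leq_trans _ h2).
  by case: (DS 1 _); rewrite ?(leq_trans _ h2).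
have step : forall k, 0 < k -> k < h ->
    ek r k * nth 0 r k + dk r k.+2 <= nth 0 r k.+1.
  move=> k k0 kh; apply: mult_gap.
  - by apply: hpc => //; lia.
  - apply: dvdn_mull; case: (DS k.+1 kh) => a _; apply: dvdn_trans a _.
    by case: (DS k (ltnW kh)).
  - by case: (DS k.+1 kh).
have inv : forall j, j.+1 <= h ->
    10 * 4 ^ j * dk r j.+2 <= 3 * nth 0 r j.+1 + dk r j.+2.
  elim=> [|j IH] jh.
    have [E1 e1] := He 1 (ltnW h2).
    rewrite D1 in E1; rewrite expn0; nia.
  have IH' := IH (ltnW jh).
  have := step j.+1 erefl jh.
  have [Ea ea] := He j.+1 (ltnW jh).
  have [Eb eb] := He j.+2 jh.
  move: IH' Eb eb ea; rewrite expnS.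
  set X := 4 ^ j; set P := dk r j.+2; set Q := dk r j.+3.
  set b := ek r j.+2; set a := ek r j.+1.
  set R1 := nth 0 r j.+1; set R2 := nth 0 r j.+2.
  have X1 : 1 <= X by rewrite expn_gt0.
  move=> IH' Eb eb ea S.
  have h1 : 6 * R1 <= 3 * (a * R1) by nia.
  rewrite Eb in IH'.
  have [b' Eb'] : exists b', b = b' + 2 by exists (b - 2); lia.
  rewrite Eb' in IH'.
  nia.
have := inv h.-1; rewrite prednK ?(ltnW h2) // => /(_ (leqnn _)).
have Dp := Dpos h.+1 erefl.
have -> : 5 * 2 ^ (2 * h - 1) = 10 * 4 ^ h.-1.
  case: h h2 {hs hfree hpc inv Dp He DS step} => // h' _.
  have -> : 2 * h'.+1 - 1 = (2 * h').+1 by lia.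
  by rewrite expnS expnM /= mulnA.
nia.
Qed.
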